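(* Let $G$ be a simple, undirected, unweighted, locally finite graph and $i\sim j$ an edge with $d_i\le d_j$. Then $\mathrm{Ric}(i,j)\ge\Phi(i,j)$, where $$\Phi(i,j)=-\Big(1-\frac1{d_i}-\frac1{d_j}-\frac{|\sharp_\Delta|}{d_j}\Big)_+-\Big(1-\frac1{d_i}-\frac1{d_j}-\frac{|\sharp_\Delta|}{d_i}\Big)_++\frac{|\sharp_\Delta|}{d_j}.$$
   Context: $x_+=\max\{x,0\}$. For an edge $i\sim j$ with degrees $d_i,d_j$ and neighbour sets $S_1(\cdot)$: $\sharp_\Delta=S_1(i)\cap S_1(j)$; $\sharp_\square^i=\{k\in S_1(i)\setminus (S_1(j)\cup\{j\}) : \exists\, w\in (S_1(k)\cap S_1(j))\setminus (S_1(i)\cup\{i\})\}$, $\sharp_\square^j$ symmetric; $\gamma_{\max}=\max\big\{\max_{k\in\sharp_\square^i}|(S_1(k)\cap S_1(j))\setminus(S_1(i)\cup\{i\})|,\ \max_{w\in\sharp_\square^j}|(S_1(w)\cap S_1(i))\setminus(S_1(j)\cup\{j\})|\big\}$. Balanced Forman curvature: $\mathrm{Ric}(i,j)=0$ if $\min\{d_i,d_j\}=1$, otherwise $\mathrm{Ric}(i,j)=\frac{2}{d_i}+\frac{2}{d_j}-2+\frac{2|\sharp_\Delta|}{\max\{d_i,d_j\}}+\frac{|\sharp_\Delta|}{\min\{d_i,d_j\}}+\frac{\gamma_{\max}^{-1}}{\max\{d_i,d_j\}}(|\sharp_\square^i|+|\sharp_\square^j|)$, the last term being $0$ when $\sharp_\square^i=\emptyset$.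 *)

(* Defs.v *)
From HB Require Import structures.
From mathcomp Require Import all_boot all_order all_algebra.
From mathcomp Require Import finmap.
Set Implicit Arguments. Unset Strict Implicit. Unset Printing Implicit Defensive.
Import Order.TTheory GRing.Theory Num.Theory.
Local Open Scope fset_scope.
Local Open Scope ring_scope.

(* A simple, undirected, unweighted, locally finite graph on an arbitrary
   (possibly infinite) vertex type V: each vertex x has a finite neighbour
   set S1 x; adjacency is symmetric and irreflexive. *)
Definition simple_lf_graph (V : choiceType) (S1 : V -> {fset V}) : Prop :=
  (forall x y : V, (y \in S1 x) = (x \in S1 y)) /\ (forall x : V, x \notin S1 x).

Section BFC.
Variables (V : choiceType) (S1 : V -> {fset V}).

Definition deg (x : V) : nat := #|` S1 x|.

Definition tri (i j : V) : {fset V} := S1 i `&` S1 j.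

Definition sqw (i j k : V) : {fset V} := (S1 k `&` S1 j) `\` (S1 i `|` [fset i]).

(* #_square^i ; #_square^j is sq j i *)
Definition sq (i j : V) : {fset V} :=
  [fset k in S1 i `\` (S1 j `|` [fset j]) | sqw i j k != fset0].

Definition gamma_max (i j : V) : nat :=
  maxn (\max_(k <- sq i j) #|` sqw i j k|) (\max_(w <- sq j i) #|` sqw j i w|).

Definition posp (R : realFieldType) (x : R) : R := Num.max x 0%R.

Definition Ric (R : realFieldType) (i j : V) : R :=
  let di := deg i in let dj := deg j in
  if minn di dj == 1%N then 0 else
  2 / di%:R + 2 / dj%:R - 2
  + 2 * (#|` tri i j|)%:R / (maxn di dj)%:R
  + (#|` tri i j|)%:R / (minn di dj)%:R
  + (if sq i j == fset0 then 0 else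
       ((gamma_max i j)%:R)^-1 / (maxn di dj)%:R
       * ((#|` sq i j|)%:R + (#|` sq j i|)%:R)).

Definition Phi (R : realFieldType) (i j : V) : R :=
  let di := (deg i)%:R in let dj := (deg j)%:R in
  let t := (#|` tri i j|)%:R in
  - posp (1 - 1 / di - 1 / dj - t / dj)
  - posp (1 - 1 / di - 1 / dj - t / di)
  + t / dj.

End BFC.

(* Main.v *)
Require Import Defs.
From HB Require Import structures.
From mathcomp Require Import all_boot all_order all_algebra.
From mathcomp Require Import finmap.
From mathcomp Require Import lra.
Import Order.TTheory GRing.Theory Num.Theory.
Local Open Scope ring_scope.

Theorem mainTheorem6 (R : realFieldType) (V : choiceType) (S1 : V -> {fset V})
  (i j : V) :
  simple_lf_graph S1 ->
  j \in S1 i ->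
  (deg S1 i <= deg S1 j)%N ->
  Phi S1 R i j <= Ric S1 R i j.
Proof.
move=> [Hsym Hirr] Hji Hle.
have posp_ge (x : R) : x <= posp x by rewrite /posp le_max lexx.
have posp_ge0 (x : R) : 0 <= posp x by rewrite /posp le_max lexx orbT.
rewrite /Ric /Phi (minn_idPl Hle) (maxn_idPr Hle).
case: ifP => [/eqP d1|_].
  have t0 : #|` tri S1 i j| = 0%N.
    have := cardfsD1 j (S1 i); rewrite Hji -/(deg S1 i) d1 add1n => -[] /esym D.
    apply/eqP; rewrite -leqn0 -D; apply: fsubset_leq_card.
    apply/fsubsetP => x; rewrite /tri !inE => /andP[xi xj].
    rewrite xi andbT; apply/negP => /eqP ex; subst x.
    by move: (Hirr j); rewrite xj.
  rewrite t0 mul0r.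
  move: (posp_ge0 (1 - 1 / (deg S1 i)%:R - 1 / (deg S1 j)%:R - 0 / (deg S1 j)%:R)).
  move: (posp_ge0 (1 - 1 / (deg S1 i)%:R - 1 / (deg S1 j)%:R - 0 / (deg S1 i)%:R)).
  set a := posp _; set b := posp _ => ha hb.
  by rewrite addr0 -opprD oppr_le0 addr_ge0.
set t := (#|` tri S1 i j|)%:R : R.
set di := (deg S1 i)%:R : R.
set dj := (deg S1 j)%:R : R.
set E := (if _ then _ else _).
have E0 : 0 <= E.
  rewrite /E; case: ifP => _ //.
  apply: mulr_ge0; last by apply: addr_ge0; apply: ler0n.
  by apply: divr_ge0; [rewrite invr_ge0 ler0n | apply: ler0n].
have h1 := posp_ge (1 - 1 / di - 1 / dj - t / dj).
have h2 := posp_ge (1 - 1 / di - 1 / dj - t / di).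
have -> : 2 / di = 2 * (1 / di) by rewrite mul1r.
have -> : 2 / dj = 2 * (1 / dj) by rewrite mul1r.
have -> : 2 * t / dj = 2 * (t / dj) by rewrite mulrA.
move: h1 h2; set a := 1 / di; set b := 1 / dj; set A := t / dj; set B := t / di.
set p := posp _; set q := posp _ => h1 h2.
lra.
Qed.
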